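(* Fix $S$. For an $S$-regular graph $G$ on $n$ vertices, $\lambda_B>\sqrt{\lambda_S}-o(1)$, where $o(1)$ denotes a quantity tending to $0$ as $n\to\infty$.
   Context: All graphs are simple, undirected and connected. For a $k\times k$ matrix $S=(s_{ij})$ with nonnegative integer entries, $G=(V,E)$ is $S$-regular if $V$ is partitioned into nonempty cells $V_1,\dots,V_k$ such that every vertex of $V_i$ has exactly $s_{ij}$ neighbours in $V_j$. Let $A$ be the adjacency matrix, $n=|V|>k$. The subspace $W=\mathrm{span}\{\mathbf{1}_{V_1},\dots,\mathbf{1}_{V_k}\}$ is $A$-invariant with eigenvalues on $W$ equal to those of $S$; the eigenvalues of $A$ on $W^\perp$ are the bulk eigenvalues, and $\lambda_B$ is the largest absolute value of a bulk eigenvalue. $\lambda_S$ is the largest eigenvalue of $S$. *)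

(* Defs.v *)
From HB Require Import structures.
From mathcomp Require Import all_boot all_order all_algebra.
From mathcomp Require Import reals.
Set Implicit Arguments. Unset Strict Implicit. Unset Printing Implicit Defensive.
Import Order.TTheory GRing.Theory Num.Theory.
Local Open Scope ring_scope.

Definition simple_connected_graph (n : nat) (e : rel 'I_n) : Prop :=
  [/\ (forall x, ~~ e x x),
      (forall x y, e x y = e y x) &
      (forall x y, connect e x y)].

(* G = (e) is S-regular w.r.t. the partition of the vertices into the cells
   V_j = cell^-1(j), j : 'I_k: every cell is nonempty and every vertex of
   V_i has exactly S i j neighbours in V_j. *)
Definition S_regular (n k : nat) (S : 'M[nat]_k) (e : rel 'I_n)
    (cell : 'I_n -> 'I_k) : Prop :=
  (forall j : 'I_k, exists x : 'I_n, cell x = j) /\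
  (forall (x : 'I_n) (j : 'I_k),
      #|[set y : 'I_n | e x y && (cell y == j)]| = S (cell x) j).

Definition adjmx (R : pzRingType) (n : nat) (e : rel 'I_n) : 'M[R]_n :=
  \matrix_(x, y) (e x y)%:R.

(* mu is a bulk eigenvalue: an eigenvalue of A on W^perp, where
   W = span{1_{V_1},...,1_{V_k}}; i.e. A v = mu v for some nonzero v
   orthogonal to every indicator vector 1_{V_j}. *)
Definition bulk_eigenvalue (R : realType) (n k : nat) (e : rel 'I_n)
    (cell : 'I_n -> 'I_k) (mu : R) : Prop :=
  exists v : 'cV[R]_n,
    [/\ v != 0,
        (forall j : 'I_k, \sum_(x : 'I_n | cell x == j) v x 0 = 0) &
        adjmx R e *m v = mu *: v].

Definition largest_eigenvalue (R : realType) (k : nat) (S : 'M[nat]_k)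
    (lam : R) : Prop :=
  eigenvalue (map_mx (fun m : nat => m%:R : R) S) lam /\
  (forall mu : R, eigenvalue (map_mx (fun m : nat => m%:R : R) S) mu ->
     mu <= lam).

(* Main.v *)
Require Import Defs.
From HB Require Import structures.
From mathcomp Require Import all_boot all_order all_algebra.
From mathcomp Require Import reals.
From mathcomp Require Import complex spectral lra.
From Stdlib Require Import Classical.
Set Implicit Arguments. Unset Strict Implicit. Unset Printing Implicit Defensive.
Import Order.TTheory GRing.Theory Num.Theory Num.Def.
Local Open Scope ring_scope.

Section Graph.
Variables (F : numFieldType) (n k : nat) (S : 'M[nat]_k) (e : rel 'I_n)
  (cell : 'I_n -> 'I_k).
Hypothesis esym : forall x y, e x y = e y x.
Hypothesis Hsurj : forall j, exists x, cell x = j.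
Hypothesis Hreg : forall x j,
  #|[set y : 'I_n | e x y && (cell y == j)]| = S (cell x) j.

Local Notation A := (adjmx F e).
Definition Vc (j : 'I_k) := #|[set x : 'I_n | cell x == j]|.

Lemma A_sym : A^T = A.
Proof. by apply/matrixP => x y; rewrite !mxE esym. Qed.

Lemma Aentry x y : A x y = (e x y)%:R.
Proof. by rewrite mxE. Qed.

Lemma sum_cells (g : 'I_k -> F) x :
  \sum_y A x y * g (cell y) = \sum_j (S (cell x) j)%:R * g j.
Proof.
rewrite (partition_big cell predT) //=; apply: eq_bigr => j _.
rewrite -Hreg.
transitivity (\sum_(y | cell y == j) (e x y)%:R * g j).
  by apply: eq_bigr => y /eqP ->; rewrite mxE.
rewrite -mulr_suml; congr (_ * _).
rewrite (eq_bigr (fun y => if e x y then 1 else 0)); last by move=> y _; case: (e x y).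
rewrite -big_mkcondr /=.
rewrite (eq_bigl (fun y => y \in [set y | e x y && (cell y == j)])); last first.
  by move=> y; rewrite inE andbC.
by rewrite sumr_const.
Qed.


Lemma rowsum x : \sum_y A x y = (\sum_j S (cell x) j)%:R.
Proof.
rewrite natr_sum -(eq_bigr _ (fun y _ => mulr1 (A x y))).
by rewrite (sum_cells (fun _ => 1)); apply: eq_bigr => j _; rewrite mulr1.
Qed.

Lemma Vc_gt0 j : (0 < Vc j)%N.
Proof.
have [x hx] := Hsurj j; apply/card_gt0P; exists x; by rewrite inE hx.
Qed.

Lemma VcF_neq0 j : (Vc j)%:R != 0 :> F.
Proof. by rewrite pnatr_eq0 -lt0n Vc_gt0. Qed.

Lemma sum_cell_const (c : F) a : \sum_(x | cell x == a) c = c *+ Vc a.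
Proof.
rewrite (eq_bigl (fun y => y \in [set y | cell y == a])); last by move=> y; rewrite inE.
by rewrite sumr_const.
Qed.

Lemma sum_cells_ind x b : \sum_y A x y * ((cell y == b)%:R) = (S (cell x) b)%:R.
Proof.
rewrite (sum_cells (fun j => (j == b)%:R)) (bigD1 b) //= eqxx mulr1 big1 ?addr0 //.
by move=> j /negbTE ->; rewrite mulr0.
Qed.

Lemma sum_ind (P : pred 'I_n) (G : 'I_n -> F) :
  \sum_(x | P x) G x = \sum_x (P x)%:R * G x.
Proof. by rewrite big_mkcond; apply: eq_bigr => x _; case: (P x); rewrite ?mul1r ?mul0r. Qed.

Lemma dcount a b : (S a b)%:R *+ Vc a = (S b a)%:R *+ Vc b :> F.
Proof.
rewrite -!sum_cell_const.
transitivity (\sum_(x | cell x == a) \sum_y A x y * ((cell y == b)%:R)).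
  by apply: eq_bigr => x /eqP <-; rewrite sum_cells_ind.
transitivity (\sum_(y | cell y == b) \sum_x A y x * ((cell x == a)%:R)); last first.
  by apply: eq_bigr => x /eqP <-; rewrite sum_cells_ind.
rewrite (sum_ind (fun x => cell x == a)) (sum_ind (fun y => cell y == b)).
under eq_bigr do rewrite mulr_sumr.
under [RHS]eq_bigr do rewrite mulr_sumr.
rewrite exchange_big /=; apply: eq_bigr => y _; apply: eq_bigr => x _.
rewrite !Aentry (esym y x) mulrCA [RHS]mulrCA; congr (_ * _); exact: mulrC.
Qed.

Definition PW : 'M[F]_n :=
  \matrix_(x, y) (if cell x == cell y then (Vc (cell x))%:R^-1 else 0).

Lemma PW_sym : PW^T = PW.
Proof.
apply/matrixP => x y; rewrite !mxE eq_sym.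
by case: eqP => // ->.
Qed.

Lemma mulPW m (u : 'M[F]_(m, n)) i y :
  (u *m PW) i y = (Vc (cell y))%:R^-1 * \sum_(x | cell x == cell y) u i x.
Proof.
rewrite mxE mulr_sumr [RHS]big_mkcond /=; apply: eq_bigr => x _; rewrite mxE.
by case: eqP => [->|]; rewrite ?mulr0 // mulrC.
Qed.

Lemma PW_idem : PW *m PW = PW.
Proof.
apply/matrixP => x y; rewrite mulPW.
rewrite (eq_bigr (fun _ => if cell x == cell y then (Vc (cell x))%:R^-1 else 0)); last first.
  by move=> z /eqP hz; rewrite mxE hz.
rewrite sum_cell_const mxE; case: eqP => [->|]; last by rewrite mul0rn mulr0.
by rewrite -[_^-1 *+ _]mulr_natr mulVf ?VcF_neq0 // mulr1.
Qed.

Lemma A_PW : A *m PW = PW *m A.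
Proof.
apply/matrixP => x y.
transitivity (\sum_z A x z * ((cell z == cell y)%:R * (Vc (cell y))%:R^-1)).
  by rewrite mxE; apply: eq_bigr => z _; rewrite !mxE; case: eqP => [->|_]; rewrite ?mul1r ?mul0r.
rewrite (sum_cells (fun j => (j == cell y)%:R * (Vc (cell y))%:R^-1)).
transitivity (\sum_z A y z * ((cell z == cell x)%:R * (Vc (cell x))%:R^-1)); last first.
  rewrite mxE; apply: eq_bigr => z _; rewrite !mxE esym eq_sym.
  by case: eqP => [->|_]; rewrite ?mul1r ?mul0r ?mulr0 // mulrC.
rewrite (sum_cells (fun j => (j == cell x)%:R * (Vc (cell x))%:R^-1)).
rewrite (bigD1 (cell y)) //= big1 ?addr0; last by move=> j /negbTE ->; rewrite mul0r mulr0.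
rewrite (bigD1 (cell x)) //= big1 ?addr0; last by move=> j /negbTE ->; rewrite mul0r mulr0.
rewrite !eqxx !mul1r.
have h : (S (cell x) (cell y))%:R * (Vc (cell x))%:R =
    (S (cell y) (cell x))%:R * (Vc (cell y))%:R :> F by rewrite !mulr_natr dcount.
have -> : (S (cell x) (cell y))%:R = (S (cell y) (cell x))%:R * (Vc (cell y))%:R / (Vc (cell x))%:R :> F.
  by rewrite -h mulfK ?VcF_neq0.
by rewrite mulrAC mulfK ?VcF_neq0.
Qed.

Lemma PW_tr : \tr PW = k%:R.
Proof.
rewrite /mxtrace (partition_big cell predT) //=.
rewrite -[k in RHS]card_ord -sumr_const; apply: eq_bigr => j _.
rewrite (eq_bigr (fun _ => (Vc j)%:R^-1)); last by move=> x /eqP <-; rewrite mxE eqxx.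
by rewrite sum_cell_const -[_^-1 *+ _]mulr_natr mulVf ?VcF_neq0.
Qed.

Lemma PW_ortho m (u : 'M[F]_(m, n)) i : u *m PW = 0 ->
  forall j, \sum_(x | cell x == j) u i x = 0.
Proof.
move=> h j; have [y hy] := Hsurj j.
have := congr1 (fun M : 'M[F]_(m, n) => M i y) h; rewrite /= mulPW mxE hy => /eqP.
by rewrite mulf_eq0 invr_eq0 (negbTE (VcF_neq0 j)) /= => /eqP.
Qed.

End Graph.

Lemma conj_pow (F : fieldType) (n : nat) m (M P : 'M[F]_n) (D : 'rV_n) :
  P \in unitmx -> M = invmx P *m diag_mx D *m P ->
  M ^+ m = invmx P *m diag_mx (\row_i (D 0 i ^+ m)) *m P.
Proof.
move=> Pu ->.
elim: m => [|m IH].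
  rewrite expr0 (_ : diag_mx _ = 1%:M) ?mulmx1 ?mulVmx //.
  by apply/matrixP => a b; rewrite !mxE expr0.
have -> : diag_mx (\row_i (D 0 i ^+ m.+1)) = diag_mx D *m diag_mx (\row_i (D 0 i ^+ m)).
  by rewrite mulmx_diag; congr diag_mx; apply/rowP => j; rewrite !mxE exprS.
rewrite exprS -mulmxE IH.
set X := invmx P; set Y := diag_mx D; set Z := diag_mx _.
by rewrite -!mulmxA (mulmxA P X) mulmxV // mul1mx.
Qed.

Lemma psd_entry (C : numClosedFieldType) n (Q P : 'M[C]_n) i :
  P *m P = P -> map_mx conjC (P^T) = P ->
  0 <= (Q *m P *m map_mx conjC (Q^T)) i i.
Proof.
move=> PP Ps.
have -> : Q *m P *m map_mx conjC (Q^T) = (Q *m P) *m map_mx conjC ((Q *m P)^T).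
  by rewrite trmx_mul map_mxM Ps !mulmxA -[Q *m P *m P]mulmxA PP.
set M := Q *m P.
rewrite mxE; apply: sumr_ge0 => x _.
rewrite [map_mx _ _ _ _]mxE [(_^T) x i]mxE; exact: mul_conjC_ge0.
Qed.

Lemma gen_T1 (F : fieldType) n (Q P : 'M[F]_n) i :
  Q \in unitmx -> row i Q *m P = row i Q -> (Q *m P *m invmx Q) i i = 1.
Proof.
move=> Qu h.
transitivity (row i (Q *m P *m invmx Q) 0 i); first by rewrite !mxE.
by rewrite !row_mul h -row_mul mulmxV // !mxE eqxx.
Qed.

Section Spec.
Variables (R : realType) (n k : nat) (S : 'M[nat]_k) (e : rel 'I_n)
  (cell : 'I_n -> 'I_k).
Hypothesis esy : forall x y, e x y = e y x.
Hypothesis Hsurj : forall j, exists x, cell x = j.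
Hypothesis Hreg : forall x j,
  #|[set y : 'I_n | e x y && (cell y == j)]| = S (cell x) j.
Local Notation C := (R[i]).
Local Notation Ac := (adjmx C e).
Local Notation PWc := (PW C cell).
Lemma ReD (a b : C) : complex.Re (a + b) = complex.Re a + complex.Re b.
Proof. by case: a => ? ?; case: b. Qed.
Lemma ImD (a b : C) : complex.Im (a + b) = complex.Im a + complex.Im b.
Proof. by case: a => ? ?; case: b. Qed.
Lemma Re0 : complex.Re (0 : C) = 0. Proof. by []. Qed.
Lemma Im0 : complex.Im (0 : C) = 0. Proof. by []. Qed.
Lemma ReMr (z : C) (y : R) : complex.Re (z * y%:C%C) = complex.Re z * y.
Proof. by case: z => a b /=; rewrite mulr0 subr0. Qed.
Lemma ImMr (z : C) (y : R) : complex.Im (z * y%:C%C) = complex.Im z * y.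
Proof. by case: z => a b /=; rewrite mulr0 add0r. Qed.
Lemma ReMl (z : C) (y : R) : complex.Re (y%:C%C * z) = y * complex.Re z.
Proof. by case: z => a b /=; rewrite mul0r subr0. Qed.
Lemma ImMl (z : C) (y : R) : complex.Im (y%:C%C * z) = y * complex.Im z.
Proof. by case: z => a b /=; rewrite mul0r addr0. Qed.
Lemma Re_sum I (r : seq I) (P : pred I) (G : I -> C) :
  complex.Re (\sum_(i <- r | P i) G i) = \sum_(i <- r | P i) complex.Re (G i).
Proof. exact: (big_morph _ ReD Re0). Qed.
Lemma Im_sum I (r : seq I) (P : pred I) (G : I -> C) :
  complex.Im (\sum_(i <- r | P i) G i) = \sum_(i <- r | P i) complex.Im (G i).
Proof. exact: (big_morph _ ImD Im0). Qed.
Lemma natC (m : nat) : (m%:R : C) = (m%:R : R)%:C%C.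
Proof. by rewrite rmorph_nat. Qed.
Lemma normC_real (x : R) : `|x%:C%C| = `|x|%:C%C.
Proof. by rewrite normc_def /= expr0n /= addr0 sqrtr_sqr. Qed.


Definition Dn := (\sum_a \sum_b S a b)%N.

Lemma realpart (p : 'rV[C]_n) (x : R) : p != 0 -> p *m Ac = x%:C%C *: p ->
  p *m PWc = 0 -> bulk_eigenvalue e cell x.
Proof.
move=> pn0 hp hpw.
pose vr : 'cV[R]_n := \col_y complex.Re (p 0 y).
pose vi : 'cV[R]_n := \col_y complex.Im (p 0 y).
have ortho := @PW_ortho _ _ _ _ Hsurj _ _ 0 hpw.
have eqr : adjmx R e *m vr = x *: vr.
  apply/matrixP => y i; rewrite ord1 {i}.
  have := congr1 (fun M : 'rV[C]_n => complex.Re (M 0 y)) hp; rewrite /= !mxE ReMl => <-.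
  rewrite Re_sum; apply: eq_bigr => z _; rewrite !mxE natC ReMr esy; exact: mulrC.
have eqi : adjmx R e *m vi = x *: vi.
  apply/matrixP => y i; rewrite ord1 {i}.
  have := congr1 (fun M : 'rV[C]_n => complex.Im (M 0 y)) hp; rewrite /= !mxE ImMl => <-.
  rewrite Im_sum; apply: eq_bigr => z _; rewrite !mxE natC ImMr esy; exact: mulrC.
have [vr0|vrn0] := eqVneq vr 0.
  exists vi; split => //.
  - apply: contraNneq pn0 => vi0; apply/eqP/matrixP => i y; rewrite ord1 {i} mxE.
    have := congr1 (fun M : 'cV[R]_n => M y 0) vr0; have := congr1 (fun M : 'cV[R]_n => M y 0) vi0.
    rewrite !mxE; case: (p 0 y) => a b /= -> ->; done.
  - move=> j; rewrite -[RHS]Im0 -(ortho j) Im_sum.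
    by apply: eq_big => [y|y _] //; rewrite mxE.
exists vr; split => //.
move=> j; rewrite -[RHS]Re0 -(ortho j) Re_sum.
by apply: eq_big => [y|y _] //; rewrite mxE.
Qed.

Lemma Ac_herm : Ac \is hermsymmx.
Proof.
apply: realsym_hermsym.
  by apply/is_hermitianmxP; rewrite expr0 scale1r map_mx_id // A_sym.
by apply/mxOverP => i j; rewrite mxE realn.
Qed.

Local Notation Q := (spectralmx Ac).
Local Notation d := (spectral_diag Ac).

Lemma Ac_decomp : Ac = invmx Q *m diag_mx d *m Q.
Proof. exact/orthomx_spectralP/hermitian_normalmx/Ac_herm. Qed.

Lemma Qunit : Q \in unitmx.
Proof. exact: spectral_unit. Qed.

Lemma QAc : Q *m Ac = diag_mx d *m Q.
Proof.
have h := Ac_decomp; move: h Qunit.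
move: (Ac) (Q) (diag_mx d) => M P D -> Pu.
by rewrite !mulmxA mulmxV // mul1mx.
Qed.

Lemma d_real i : d 0 i = (complex.Re (d 0 i))%:C%C.
Proof.
have /mxOverP/(_ 0 i) h := hermitian_spectral_diag_real Ac_herm.
by rewrite (RRe_real h).
Qed.

Lemma row_eig i : row i Q *m Ac = d 0 i *: row i Q.
Proof. by rewrite -row_mul QAc mul_diag_mx; apply/rowP => j; rewrite !mxE. Qed.

Lemma mapA_pow m : map_mx (real_complex R) (adjmx R e ^+ m) = Ac ^+ m.
Proof.
elim: m => [|m IH].
  by rewrite !expr0; apply/matrixP => a b; rewrite !mxE; case: (a == b).
rewrite !exprS -!mulmxE map_mxM IH; congr (_ *m _).
by apply/matrixP => a b; rewrite !mxE natC.
Qed.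

Lemma Ac_pow m : Ac ^+ m = invmx Q *m diag_mx (\row_i (d 0 i ^+ m)) *m Q.
Proof. exact: (conj_pow m Qunit Ac_decomp). Qed.

Lemma tr_pow m : \tr (adjmx R e ^+ m) = \sum_i (complex.Re (d 0 i)) ^+ m.
Proof.
apply: (@complexI R).
rewrite -trace_map_mx mapA_pow Ac_pow mxtrace_mulC mulmxA mulmxV ?Qunit // mul1mx.
rewrite mxtrace_diag rmorph_sum; apply: eq_bigr => i _.
rewrite mxE rmorphXn; congr (_ ^+ _); exact: d_real.
Qed.

Lemma Qrow_neq0 i : row i Q != 0.
Proof.
apply/negP => /eqP h.
have /unitarymxP/matrixP/(_ i i) := spectral_unitarymx Ac.
rewrite !mxE eqxx /= big1 ?oner_eq0 //.
  by move=> /esym/eqP; rewrite oner_eq0.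
by move=> j _; have := congr1 (fun M : 'rV[C]_n => M 0 j) h; rewrite !mxE => ->; rewrite mul0r.
Qed.

Lemma rowsumDn x : (\sum_j S (cell x) j <= Dn)%N.
Proof.
by rewrite /Dn [X in (_ <= X)%N](bigD1 (cell x)) //= leq_addr.
Qed.

Lemma eig_bound i : `|complex.Re (d 0 i)| <= (Dn%:R : R).
Proof.
pose q := row i Q; pose dd := d 0 i.
have hq : q *m Ac = dd *: q by exact: row_eig.
have qn0 : q != 0 by exact: Qrow_neq0.
pose s := \sum_y `|q 0 y|.
have [y0 hy0] : exists y, q 0 y != 0.
  case: (boolP [exists y, q 0 y != 0]) => [/existsP //|/existsPn h].
  by case/negP: qn0; apply/eqP/rowP => y; move: (h y); rewrite negbK !mxE => /eqP.
have s_gt0 : 0 < s.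
  by rewrite /s (bigD1 y0) //= ltr_wpDr ?sumr_ge0 // normr_gt0.
have H1 : `|dd| * s = \sum_y `|(q *m Ac) 0 y|.
  rewrite hq mulr_sumr; apply: eq_bigr => y _; by rewrite !mxE normrM.
have H2 : \sum_y `|(q *m Ac) 0 y| <= \sum_y \sum_x `|q 0 x| * Ac x y.
  apply: ler_sum => y _; rewrite mxE; apply: le_trans (ler_norm_sum _ _ _) _.
  by apply: ler_sum => x _; rewrite normrM !mxE normr_nat.
have H3 : \sum_y \sum_x `|q 0 x| * Ac x y <= (Dn%:R : C) * s.
  rewrite exchange_big /= /s mulr_sumr; apply: ler_sum => x _.
  rewrite -mulr_sumr mulrC; apply: ler_wpM2r => //.
  rewrite (rowsum _ Hreg) ler_nat; exact: rowsumDn.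
have : `|dd| <= Dn%:R.
  by rewrite -(ler_pM2r s_gt0); apply: le_trans H3; rewrite H1.
by rewrite /dd d_real normC_real natC lecR.
Qed.

Lemma PWc_real : PWc \is a realmx.
Proof.
apply/mxOverP => x y; rewrite mxE; case: ifP => _; last exact: real0.
by rewrite realV realn.
Qed.

Lemma PWc_adj : map_mx conjC (PWc^T) = PWc.
Proof. by rewrite (PW_sym C) realmxC ?PWc_real. Qed.

Lemma count_big (c : R) :
  (forall mu, bulk_eigenvalue e cell mu -> `|mu| <= c) ->
  (#|[set i : 'I_n | (c < `|complex.Re (d 0 i)|)%R]| <= k)%N.
Proof.
move=> H.
have Qu := spectral_unitarymx Ac.
pose T i := (Q *m PWc *m invmx Q) i i.
have sumT : \sum_i T i = k%:R.
  rewrite -(PW_tr C Hsurj) /T -/(mxtrace _) mxtrace_mulC mulmxA mulVmx ?Qunit //.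
  by rewrite mul1mx.
have T_ge0 i : 0 <= T i.
  by rewrite /T invmx_unitary //; apply: psd_entry; [exact: (PW_idem C Hsurj)|exact: PWc_adj].
have T1 i : c < `|complex.Re (d 0 i)| -> T i = 1.
  move=> hc.
  pose q := row i Q; pose dd := d 0 i.
  have hq : q *m Ac = dd *: q by exact: row_eig.
  pose p := q - q *m PWc.
  have hpA : p *m Ac = dd *: p.
    by rewrite /p mulmxBl -mulmxA -(A_PW C esy Hsurj Hreg) mulmxA hq -scalemxAl scalerBr.
  have hpP : p *m PWc = 0.
    by rewrite /p mulmxBl -mulmxA (PW_idem C Hsurj) subrr.
  have p0 : p = 0.
    apply/eqP; apply: contraTT hc => pn0; rewrite -leNgt.
    apply: H; apply: (realpart pn0) => //.
    by rewrite hpA /dd {1}d_real.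
  have qP : q *m PWc = q by apply/eqP; rewrite eq_sym -subr_eq0; apply/eqP.
  by apply: gen_T1; rewrite ?Qunit.
set I := [set i : 'I_n | (c < `|complex.Re (d 0 i)|)%R].
have : (#|I|%:R : C) <= k%:R.
  rewrite -sumT (bigID (fun i => i \in I)) /= -[#|I|%:R]addr0.
  apply: lerD; last exact: sumr_ge0.
  rewrite (eq_bigr (fun _ => 1)); last by move=> i; rewrite inE => /T1.
  by rewrite sumr_const.
by rewrite ler_nat.
Qed.

Lemma spec_bound (c : R) :
  (forall mu, bulk_eigenvalue e cell mu -> `|mu| <= c) ->
  exists r : 'I_n -> R, [/\ forall m, \tr (adjmx R e ^+ m) = \sum_i r i ^+ m,
     forall i, `|r i| <= (Dn%:R : R) &
     (#|[set i : 'I_n | (c < `|r i|)%R]| <= k)%N].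
Proof.
move=> H; exists (fun i => complex.Re (d 0 i)); split.
- exact: tr_pow.
- exact: eig_bound.
- exact: count_big.
Qed.

End Spec.

Lemma eigen_tr (F : fieldType) k (M : 'M[F]_k) a :
  eigenvalue M a -> eigenvalue M^T a.
Proof.
rewrite /eigenvalue /eigenspace !kermx_eq0 !row_free_unit.
have -> : M^T - a%:M = (M - a%:M)^T by rewrite linearB /= tr_scalar_mx.
by rewrite unitmx_tr.
Qed.

Lemma right_eigvec (R : realType) k (S : 'M[nat]_k) (lam : R) :
  eigenvalue (map_mx (fun m : nat => m%:R : R) S) lam ->
  exists u : 'rV[R]_k, u != 0 /\
    forall j, \sum_i (S j i)%:R * u 0 i = lam * u 0 j.
Proof.
move/eigen_tr/eigenvalueP => [u hu un0]; exists u; split => // j.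
have := congr1 (fun M : 'rV[R]_k => M 0 j) hu; rewrite /= !mxE => <-.
by apply: eq_bigr => i _; rewrite !mxE mulrC.
Qed.

Lemma normalized_vec (R : realType) k (S : 'M[nat]_k) (lam : R) : 0 <= lam ->
  eigenvalue (map_mx (fun m : nat => m%:R : R) S) lam ->
  exists (z : 'I_k -> R) (i0 : 'I_k), [/\ forall j, 0 <= z j, forall j, z j <= 1,
    z i0 = 1 & forall j, lam * z j <= \sum_i (S j i)%:R * z i].
Proof.
move=> lam0 /right_eigvec [u [un0 hu]].
have [j0 hj0] : exists j, u 0 j != 0.
  case: (boolP [exists j, u 0 j != 0]) => [/existsP [j hj]|/existsPn h]; first by exists j.
  case/negP: un0; apply/eqP/rowP => j.
  by rewrite [RHS]mxE; apply/eqP; move: (h j); rewrite negbK.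
have [i0 _ hi0] := @Order.TotalTheory.arg_maxP _ R _ j0 predT (fun i => `|u 0 i|) isT.
set m := `|u 0 i0|.
have m_gt0 : 0 < m by apply: lt_le_trans (hi0 j0 isT); rewrite normr_gt0.
exists (fun j => `|u 0 j| / m), i0; split.
- by move=> j /=; exact: divr_ge0 (normr_ge0 _) (ltW m_gt0).
- by move=> j /=; rewrite ler_pdivrMr // mul1r; exact: hi0.
- by rewrite /= divff // gt_eqF.
move=> j /=; rewrite mulrA -(ger0_norm lam0) -normrM -hu.
under eq_bigr do rewrite mulrA.
rewrite -mulr_suml ler_wpM2r // ?invr_ge0 ?(ltW m_gt0) //.
by apply: le_trans (ler_norm_sum _ _ _) _; apply: ler_sum => i _; rewrite normrM normr_nat.
Qed.

Section Walks.
Variables (R : realType) (n k : nat) (S : 'M[nat]_k) (e : rel 'I_n)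
  (cell : 'I_n -> 'I_k).
Hypothesis esy : forall x y, e x y = e y x.
Hypothesis Hsurj : forall j, exists x, cell x = j.
Hypothesis Hreg : forall x j,
  #|[set y : 'I_n | e x y && (cell y == j)]| = S (cell x) j.
Hypothesis Hconn : forall x y, connect e x y.
Local Notation A := (adjmx R e).

Lemma Apow_nat s x y : (A ^+ s) x y \is a Num.nat.
Proof.
elim: s x y => [|s IH] x y.
  by rewrite expr0 -idmxE mxE natr_nat.
rewrite exprS -mulmxE mxE; apply: rpred_sum => z _; apply: rpredM => //.
by rewrite mxE natr_nat.
Qed.

Lemma Apow_ge0 s x y : 0 <= (A ^+ s) x y.
Proof. exact/natr_ge0/Apow_nat. Qed.

Lemma Apow_sym s : (A ^+ s)^T = A ^+ s.
Proof.
elim: s => [|s IH]; first by rewrite expr0 -idmxE tr_scalar_mx.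
by rewrite {1}exprS exprSr -!mulmxE trmx_mul IH (A_sym _ esy).
Qed.

Definition f s x := \sum_y (A ^+ s) x y.

Lemma f_rec s x : f s.+1 x = \sum_y A x y * f s y.
Proof.
rewrite /f exprS -mulmxE.
under eq_bigr do rewrite mxE.
rewrite exchange_big /=; apply: eq_bigr => z _; by rewrite mulr_sumr.
Qed.

Lemma f_ge0 s x : 0 <= f s x.
Proof. by apply: sumr_ge0 => y _; exact: Apow_ge0. Qed.

Lemma f_nb s x w : e x w -> f s w <= f s.+1 x.
Proof.
move=> exw; rewrite f_rec (bigD1 w) //= mxE exw mul1r ler_wpDr //.
by apply: sumr_ge0 => y _; rewrite mulr_ge0 ?f_ge0 // mxE ler0n.
Qed.

Lemma tr_lb s : \sum_x f s x <= \tr (A ^+ (s + s)).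
Proof.
rewrite /mxtrace exprD -mulmxE; apply: ler_sum => x _; rewrite mxE /f.
apply: ler_sum => y _.
have -> : (A ^+ s) y x = (A ^+ s) x y by rewrite -{1}(Apow_sym s) mxE.
have /natrP[m ->] := Apow_nat s x y.
by rewrite -natrM ler_nat; case: m => // m; rewrite leq_pmulr.
Qed.

Variables (lam : R) (z : 'I_k -> R) (i0 : 'I_k).
Hypothesis lam0 : 0 <= lam.
Hypothesis z0 : forall j, 0 <= z j.
Hypothesis z1 : forall j, z j <= 1.
Hypothesis zi0 : z i0 = 1.
Hypothesis zeig : forall j, lam * z j <= \sum_i (S j i)%:R * z i.

Lemma f0 x : f 0 x = 1.
Proof.
rewrite /f expr0 -idmxE (bigD1 x) //= mxE eqxx big1 ?addr0 //.
by move=> y /negbTE hy; rewrite mxE eq_sym hy.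
Qed.

Lemma f_lb1 s x : lam ^+ s * z (cell x) <= f s x.
Proof.
elim: s x => [|s IH] x; first by rewrite f0 expr0 mul1r.
rewrite f_rec.
apply: le_trans (_ : \sum_y A x y * (lam ^+ s * z (cell y)) <= _); last first.
  by apply: ler_sum => y _; rewrite ler_wpM2l // mxE ler0n.
rewrite (sum_cells Hreg (fun j => lam ^+ s * z j) x).
under eq_bigr do rewrite mulrCA.
rewrite -mulr_sumr exprSr -mulrA ler_wpM2l ?exprn_ge0 //.
Qed.

Definition L := Num.max 1 lam.
Lemma L_ge1 : 1 <= L. Proof. by rewrite le_max lexx. Qed.
Lemma lam_leL : lam <= L. Proof. by rewrite le_max lexx orbT. Qed.
Lemma L_ge0 : 0 <= L. Proof. exact: le_trans ler01 L_ge1. Qed.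

Definition Fm (X : {set 'I_k}) : {set 'I_k} :=
  i0 |: (X :|: [set j | [exists i in X, (0 < S j i)%N]]).

Lemma Fm_homo : {homo Fm : X Y / X \subset Y}.
Proof.
move=> X Y /subsetP h; apply/subsetP => j; rewrite !inE.
case/orP => [->//|/orP[hj|/existsP[i /andP[iX hi]]]]; apply/orP; right; apply/orP.
  by left; exact: h.
by right; apply/existsP; exists i; rewrite hi andbT; exact: h.
Qed.

Lemma iter_lb r x : cell x \in iter r Fm set0 ->
  forall s, (r <= s)%N -> lam ^+ s <= L ^+ r * f s x.
Proof.
elim: r x => [|r IH] x; first by rewrite inE.
rewrite /= !inE => /orP[/eqP hx|/orP[hx|/existsP[i /andP[iX hi]]]] s hs.
- apply: le_trans (_ : f s x <= _).
    by have := f_lb1 s x; rewrite hx zi0 mulr1.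
  by rewrite ler_peMl ?f_ge0 // exprn_ege1 // L_ge1.
- apply: le_trans (IH x hx s (ltnW hs)) _.
  by rewrite exprS ler_wpM2r ?f_ge0 // ler_peMl ?exprn_ge0 ?L_ge0 ?L_ge1.
- have : (0 < #|[set y : 'I_n | e x y && (cell y == i)]|)%N by rewrite Hreg.
  case/card_gt0P => w; rewrite inE => /andP[exw /eqP cw].
  case: s hs => // s hs.
  have := IH w; rewrite cw => /(_ iX s hs) h.
  rewrite exprS [L ^+ r.+1]exprS -mulrA.
  apply: le_trans (_ : L * lam ^+ s <= _).
    by rewrite ler_wpM2r ?exprn_ge0 ?lam_leL.
  rewrite ler_wpM2l ?L_ge0 //; apply: le_trans h _.
  by rewrite ler_wpM2l ?exprn_ge0 ?L_ge0 ?f_nb.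
Qed.

Lemma all_cells j : j \in fixset Fm.
Proof.
have hX := fixsetK Fm_homo.
have [x <-] := Hsurj j.
have [w cw] := Hsurj i0.
have /connectP[p hp hw] := Hconn x w.
elim: p x hp hw => [|y p IHp] x /=.
  by move=> _ hw; rewrite -hX !inE -hw cw eqxx.
case/andP => exy hp hw; have hy := IHp y hp hw.
rewrite -hX !inE; apply/orP; right; apply/orP; right.
apply/existsP; exists (cell y); rewrite hy /= -Hreg.
by apply/card_gt0P; exists y; rewrite inE exy eqxx.
Qed.

Lemma f_lb s x : (k <= s)%N -> lam ^+ s <= L ^+ k * f s x.
Proof.
move=> hs; have := all_cells (cell x); rewrite /fixset card_ord => hx.
exact: iter_lb hx s hs.
Qed.

Lemma trace_lb s : (k <= s)%N -> n%:R * lam ^+ s <= L ^+ k * \tr (A ^+ (s + s)).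
Proof.
move=> hs; apply: le_trans (_ : L ^+ k * \sum_x f s x <= _); last first.
  by rewrite ler_wpM2l ?exprn_ge0 ?L_ge0 ?tr_lb.
rewrite mulr_sumr mulr_natl -[n in _ *+ n]card_ord -sumr_const.
by apply: ler_sum => x _; exact: f_lb.
Qed.

End Walks.

Lemma pow_mono (R : realDomainType) (x y : R) t : 0 <= x -> x <= y -> x ^+ t <= y ^+ t.
Proof.
move=> x0 xy; elim: t => [|t IH]; first by rewrite !expr0.
rewrite !exprS; apply: ler_pM => //; exact: exprn_ge0.
Qed.

Lemma pow_even_le (R : realDomainType) (x b : R) t :
  `|x| <= b -> x ^+ (t + t) <= b ^+ t * b ^+ t.
Proof.
move=> hb; rewrite exprD; apply: le_trans (ler_norm _) _.
rewrite normrM normrX; apply: ler_pM; rewrite ?exprn_ge0 //; exact: pow_mono.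
Qed.

Lemma bernoulli (R : realDomainType) (x : R) t : 0 <= x -> 1 + t%:R * x <= (1 + x) ^+ t.
Proof.
move=> x0; elim: t => [|t IH]; first by rewrite expr0 mul0r addr0.
rewrite exprSr; apply: le_trans (_ : (1 + t%:R * x) * (1 + x) <= _); last first.
  by apply: ler_wpM2r => //; lra.
have : 0 <= t%:R * x * x by rewrite mulr_ge0 // mulr_ge0.
rewrite -natr1; lra.
Qed.

Lemma choose_t (R : realType) (lam q a : R) (k0 : nat) : 0 < q -> q < lam ->
  exists t, (k0 <= t)%N /\ a * q ^+ t < lam ^+ t.
Proof.
move=> q0 ql.
set x := lam / q - 1.
have x0 : 0 < x by rewrite /x subr_gt0 ltr_pdivlMr // mul1r.
set b := Num.Def.archi_bound (`|a| / x).
have hb : `|a| / x < b%:R by apply: archi_boundP; rewrite divr_ge0 // ltW.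
exists (k0 + b)%N; split; first exact: leq_addr.
have hrho : lam = (1 + x) * q by rewrite /x addrC subrK divfK // gt_eqF.
rewrite [X in _ < X ^+ _]hrho exprMn ltr_pM2r ?exprn_gt0 //.
apply: le_lt_trans (ler_norm a) _.
apply: lt_le_trans (bernoulli _ (ltW x0)).
have : `|a| < b%:R * x by rewrite -ltr_pdivrMr.
have : b%:R <= (k0 + b)%N%:R :> R by rewrite ler_nat leq_addl.
have : 0 <= x by exact: ltW.
move=> h1 h2 h3; nra.
Qed.

Unset Implicit Arguments.

Theorem mainTheorem12 (R : realType) (k : nat) (S : 'M[nat]_k) (lamS : R)
  (HlamS : largest_eigenvalue S lamS) :
  forall eps : R, 0 < eps ->
  exists N : nat, forall (n : nat) (e : rel 'I_n) (cell : 'I_n -> 'I_k),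
    (N <= n)%N -> (k < n)%N ->
    simple_connected_graph e -> S_regular S e cell ->
    exists mu : R, bulk_eigenvalue e cell mu /\ Num.sqrt lamS - eps < `|mu|.
Proof.
move=> eps heps.
have Heig := HlamS.1.
set c := Num.sqrt lamS - eps.
have key : forall n (e : rel 'I_n) (cell : 'I_n -> 'I_k),
    (forall x y, e x y = e y x) -> (forall j, exists x, cell x = j) ->
    (forall x j, #|[set y : 'I_n | e x y && (cell y == j)]| = S (cell x) j) ->
    ~ (exists mu : R, bulk_eigenvalue e cell mu /\ c < `|mu|) ->
    exists r : 'I_n -> R, [/\ forall m, \tr (adjmx R e ^+ m) = \sum_i r i ^+ m,
     forall i, `|r i| <= ((Dn S)%:R : R) &
     (#|[set i : 'I_n | (c < `|r i|)%R]| <= k)%N].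
  move=> n e cell esy Hsurj Hreg hno; apply: (spec_bound esy Hsurj Hreg).
  move=> mu hb; rewrite leNgt; apply/negP => hlt; apply: hno; exists mu; split => //.
case: (ltP c 0) => hc.
  exists 0%N => n e cell _ hkn [_ esy Hconn] [Hsurj Hreg].
  apply: NNPP => hno.
  have [r [_ _ hcard]] := key n e cell esy Hsurj Hreg hno.
  have : [set i : 'I_n | (c < `|r i|)%R] = setT.
    by apply/setP => i; rewrite !inE (lt_le_trans hc) // normr_ge0.
  move=> hT; move: hcard; rewrite hT cardsT card_ord => hnk.
  by move: hkn; rewrite ltnNge hnk.
have sq_pos : 0 < Num.sqrt lamS by rewrite /c in hc; lra.
have lam_pos : 0 < lamS by move: sq_pos; rewrite sqrtr_gt0.
have csq : c < Num.sqrt lamS by rewrite /c; lra.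
set q := c * c.
have hq : q < lamS.
  rewrite -[lamS](@sqr_sqrtr _ lamS) ?ltW // expr2.
  by apply: ltr_pM => //.
have q0 : 0 <= q by rewrite mulr_ge0.
set q' := (q + lamS) / 2.
have q'0 : 0 < q' by rewrite /q'; lra.
have qq' : q <= q' by rewrite /q'; lra.
have q'l : q' < lamS by rewrite /q'; lra.
have [z [i0 [_ z1 zi0 zeig]]] := normalized_vec (ltW lam_pos) Heig.
set L0 := L lamS.
have [t [hkt ht]] := choose_t (L0 ^+ k) k q'0 q'l.
set delta := lamS ^+ t - L0 ^+ k * q' ^+ t.
have d0 : 0 < delta by rewrite /delta subr_gt0.
set D : R := (Dn S)%:R.
set B := L0 ^+ k * (k%:R * (D ^+ t * D ^+ t)).
set N := Num.Def.archi_bound (B / delta).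
have hN : B / delta < N%:R.
  apply: archi_boundP; rewrite divr_ge0 ?(ltW d0) // /B mulr_ge0 ?exprn_ge0 //.
    by rewrite /L0 /L le_max ler01.
  by rewrite mulr_ge0 // mulr_ge0 ?exprn_ge0 // /D ler0n.
exists N => n e cell hNn hkn [_ esy Hconn] [Hsurj Hreg].
apply: NNPP => hno.
have [r [htr hD hcard]] := key n e cell esy Hsurj Hreg hno.
have lb := trace_lb esy Hsurj Hreg Hconn (ltW lam_pos) z1 zi0 zeig hkt.
set I := [set i : 'I_n | (c < `|r i|)%R] in hcard.
have ub : \tr (adjmx R e ^+ (t + t)) <= k%:R * (D ^+ t * D ^+ t) + n%:R * q' ^+ t.
  rewrite htr (bigID (fun i => i \in I)) /=; apply: lerD.
    apply: le_trans (_ : \sum_(i | i \in I) (D ^+ t * D ^+ t) <= _).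
      by apply: ler_sum => i _; apply: pow_even_le.
    rewrite sumr_const -[X in X <= _]mulr_natl; apply: ler_wpM2r.
      by rewrite mulr_ge0 ?exprn_ge0 // /D ler0n.
    by rewrite ler_nat.
  apply: le_trans (_ : \sum_(i | i \notin I) q' ^+ t <= _).
    apply: ler_sum => i hi; apply: le_trans (pow_even_le _ (_ : `|r i| <= c)) _.
      by move: hi; rewrite inE -leNgt.
    by rewrite -exprMn; apply: pow_mono.
  rewrite mulr_natl -[n in _ *+ n]card_ord -sumr_const.
  rewrite [X in _ <= X](bigID (fun i => i \in I)) /= lerDr.
  by apply: sumr_ge0 => i _; rewrite exprn_ge0 // ltW.
have L0k : 0 <= L0 ^+ k by rewrite exprn_ge0 // /L0 /L le_max ler01.
have : n%:R * delta <= B.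
  rewrite /delta /B mulrBr.
  have := ler_wpM2l L0k ub; rewrite mulrDr => h2.
  have := le_trans lb h2.
  set u := n%:R * lamS ^+ t; set v := L0 ^+ k * (k%:R * (D ^+ t * D ^+ t)).
  set w := L0 ^+ k * (n%:R * q' ^+ t).
  have -> : n%:R * (L0 ^+ k * q' ^+ t) = w by rewrite /w mulrCA.
  lra.
have : N%:R <= n%:R :> R by rewrite ler_nat.
move: hN; rewrite ltr_pdivrMr // => hN hNn' hnd.
have : N%:R * delta <= n%:R * delta by rewrite ler_wpM2r // ltW.
lra.
Qed.
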